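(* Let $d=2b$ be even, $d\geq 4$, and let $q\geq b$. Then every half-edge of every $(2q,2b)$-branching mobile has even weight. Similarly, the weights of the half-edges in the minimal pseudo $d/(d-2)$-orientation of any $2q$-annular $2b$-angulation of girth $2b$ are even.
   Context: A mobile is a plane tree whose vertices are black or white (not necessarily properly), black vertices possibly carrying dangling half-edges (buds). An $\mathbb N$-mobile gives each non-bud half-edge a weight in $\{0,1,2,\dots\}$, positive if incident to a white vertex, zero if incident to a black vertex; vertex weight = sum of weights of incident non-bud half-edges; edge weight = sum of its two half-edge weights; black-vertex degree counts buds. For $p\geq d\geq 3$, a $(p,d)$-branching mobile is an $\mathbb N$-mobile such that every edge has weight $d-2$; every black vertex has degree $d$ except one black vertex $s$ (special vertex) of degree $p$ carrying no bud; every white vertex not adjacent to $s$ has weight $d$, and the weights of the neighbors of $s$ sum to $pd-p-d$. A map is a connected finite graph embedded in the oriented sphere up to orientation-preserving homeomorphism; girth is the minimal cycle length. A $p$-annular $d$-angulation is a map with a marked face (boundary face) of degree $p$ with simple contour, all other faces of degree $d$, and a marked root-face distinct from the boundary face. A biorientation assigns to each half-edge a direction (ingoing/outgoing); an edge is $i$-way if $i$ of its half-edges are ingoing; directed paths follow 2-way edges or 1-way edges toward the ingoing half-edge; a circuit (simple closed directed path) is counterclockwise if the root-face is on its right; minimal = no counterclockwise circuit. An $\mathbb N$-biorientation has half-edge weights in $\{0,1,2,\dots\}$, positive on ingoing, zero on outgoing half-edges. A pseudo $d/(d-2)$-orientation is an $\mathbb N$-biorientation with every edge of weight $d-2$, every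 vertex not incident to the boundary face of weight $d$ (vertex weight = sum of weights of incident ingoing half-edges), and the boundary face contour a directed cycle of 1-way edges each with the boundary face on its right. A $p$-annular $d$-angulation of girth $d$ has a unique minimal one. *)

(* Defs.v *)
(* Maps and plane trees are encoded by rotation systems:
   a finite set of half-edges (darts) D, an involution alpha pairing the two
   half-edges of an edge, and a permutation sigma giving the COUNTERCLOCKWISE
   cyclic order of half-edges around each vertex.  Vertices are sigma-orbits,
   faces are orbits of phi = (alpha * sigma)%g, i.e. h |-> sigma (alpha h);
   with these conventions the face (phi-orbit) of a dart h lies on the RIGHT
   of h when h is traversed from its vertex (tail) to the vertex of alpha h. *)
From mathcomp Require Import all_boot fingroup perm.
Set Implicit Arguments. Unset Strict Implicit. Unset Printing Implicit Defensive.

Section Rot.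
Variable D : finType.
Implicit Types (alpha sigma : {perm D}) (h g : D).

Definition vtx sigma h : {set D} := porbit sigma h.
Definition fface alpha sigma h : {set D} := porbit (alpha * sigma)%g h.
Definition edge_of alpha h : {set D} := [set h; alpha h].

Definition dmove alpha sigma : rel D := fun a b => (b == sigma a) || (b == alpha a).

Definition planar_map alpha sigma : Prop :=
  [/\ involutive alpha, (forall h, alpha h != h),
      (forall x y, connect (dmove alpha sigma) x y) &
      #|porbits sigma| + #|porbits (alpha * sigma)%g| = (#|D| %/ 2) + 2].

(* a simple cycle of the underlying graph, as a cyclic sequence of darts
   (each dart ends where the next starts), with distinct vertices and edges *)
Definition graph_cycle alpha sigma (c : seq D) : bool :=
  [&& c != [::],
      path.cycle (fun g g' => vtx sigma (alpha g) == vtx sigma g') c,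
      uniq (map (vtx sigma) c) & uniq (map (edge_of alpha) c)].

Definition has_girth alpha sigma (k : nat) : Prop :=
  (exists c, graph_cycle alpha sigma c /\ size c = k) /\
  (forall c, graph_cycle alpha sigma c -> k <= size c).

(* p-annular d-angulation: boundary face = face of dart hb, root face = face of r *)
Definition annular_dangulation alpha sigma (p d : nat) (hb r : D) : Prop :=
  [/\ planar_map alpha sigma,
      #|fface alpha sigma hb| = p,
      {in fface alpha sigma hb &, injective (vtx sigma)},
      (forall h, fface alpha sigma h != fface alpha sigma hb ->
                 #|fface alpha sigma h| = d) &
      fface alpha sigma r != fface alpha sigma hb].

(* N-biorientations: a half-edge is ingoing iff its weight is positive.
   Pseudo d/(d-2)-orientation. *)
Definition pseudo_orientation alpha sigma (d : nat) (hb : D) (w : D -> nat) : Prop :=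
  [/\ (forall h, w h + w (alpha h) = d - 2),
      (forall h, (forall g, g \in fface alpha sigma hb -> vtx sigma g != vtx sigma h) ->
                 \sum_(g in vtx sigma h) w g = d) &
      (forall h, h \in fface alpha sigma hb -> w h = 0 /\ 0 < w (alpha h))].

(* a dart g can be followed (from its tail to its head) by a directed path
   iff the half-edge alpha g at the head is ingoing *)
Definition directed_circuit alpha sigma (w : D -> nat) (c : seq D) : bool :=
  graph_cycle alpha sigma c && all (fun g => 0 < w (alpha g)) c.

(* moves between darts that stay in the region on the right of the cycle c:
   walk around a face, or cross an edge not belonging to c *)
Definition right_move alpha sigma (c : seq D) : rel D :=
  fun a b => (b == (alpha * sigma)%g a) ||
             [&& b == alpha a, a \notin c & alpha a \notin c].

Definition root_on_right alpha sigma (r : D) (c : seq D) : bool :=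
  has (fun h => connect (right_move alpha sigma c) h r) c.

Definition minimal_orientation alpha sigma (w : D -> nat) (r : D) : Prop :=
  forall c, directed_circuit alpha sigma w c -> ~~ root_on_right alpha sigma r c.

End Rot.

Section Mob.
Variable H : finType.
Implicit Types (alpha sigma : {perm H}) (h g : H).

(* plane tree with buds: buds are the half-edges fixed by alpha *)
Definition plane_tree_buds (bud : pred H) alpha sigma : Prop :=
  [/\ (forall h, bud h -> alpha h = h),
      (forall h, ~~ bud h -> alpha h != h),
      involutive alpha,
      (forall x y, connect (dmove alpha sigma) x y) &
      #|porbits sigma| = (#|[set h | ~~ bud h]| %/ 2) + 1].

Definition vweight (bud : pred H) (w : H -> nat) (v : {set H}) : nat :=
  \sum_(g in v | ~~ bud g) w g.

Definition adjacent_to (bud : pred H) alpha sigma h hs : bool :=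
  [exists g in vtx sigma h, ~~ bud g && (alpha g \in vtx sigma hs)].

Definition neighbours alpha sigma hs : {set {set H}} :=
  [set vtx sigma (alpha g) | g in vtx sigma hs].

(* (p,d)-branching mobile; black v = true means the vertex v is black;
   the special vertex s is the vertex of hs *)
Definition branching_mobile (bud : pred H) alpha sigma (black : {set H} -> bool)
    (w : H -> nat) (p d : nat) (hs : H) : Prop :=
  [/\ plane_tree_buds bud alpha sigma,
      (forall h, bud h -> black (vtx sigma h)),
      (forall h, ~~ bud h -> (0 < w h) = ~~ black (vtx sigma h)),
      (forall h, ~~ bud h -> w h + w (alpha h) = d - 2) & 
   [/\ [/\ black (vtx sigma hs), #|vtx sigma hs| = p &
          (forall h, h \in vtx sigma hs -> ~~ bud h)],
      (forall h, black (vtx sigma h) -> vtx sigma h != vtx sigma hs ->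
                 #|vtx sigma h| = d),
      (forall h, ~~ black (vtx sigma h) -> ~~ adjacent_to bud alpha sigma h hs ->
                 vweight bud w (vtx sigma h) = d) &
      \sum_(u in neighbours alpha sigma hs) vweight bud w u = p * d - p - d]].

End Mob.

(* Main.v *)
Require Import Defs.
From mathcomp Require Import all_boot fingroup perm zify.
Set Implicit Arguments. Unset Strict Implicit. Unset Printing Implicit Defensive.

Lemma sorted_drop (T : Type) (r : rel T) n s : sorted r s -> sorted r (drop n s).
Proof.
elim: s n => [|a s IH] [|n] //= h; apply: IH; exact: path_sorted h.
Qed.

Lemma last_drop (T : Type) (x0 : T) n s : n < size s -> last x0 (drop n s) = last x0 s.
Proof.
elim: s n x0 => [|a s IH] [|n] x0 //= h.
case: s IH h => [|b s] IH h //=.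
by rewrite IH.
Qed.

Section Gen.
Variable D : finType.
Variables alpha sigma : {perm D}.
Hypothesis alphaK : involutive alpha.
Local Notation vtx := (Defs.vtx sigma).
Local Notation edge := (edge_of alpha).

Lemma vtx_id x : x \in vtx x.  Proof. exact: porbit_id. Qed.
Lemma vtx_eqE x y : (vtx x == vtx y) = (x \in vtx y). Proof. exact: eq_porbit_mem. Qed.
Lemma vtxS x : vtx (sigma x) = vtx x.
Proof. by have := porbit_perm sigma 1 x; rewrite expg1. Qed.

Definition cr (g g' : D) := vtx (alpha g) == vtx g'.
Definition nbr (g g' : D) := cr g g' && (g' != alpha g).

Lemma sorted_nbr_cr c : sorted nbr c -> sorted cr c.
Proof. case: c => //= a s; apply: sub_path => x y /andP[] //. Qed.

Lemma succ_vtx c x0 i : sorted cr c -> cr (last x0 c) (head x0 c) -> i < size c ->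
  vtx (alpha (nth x0 c i)) = vtx (nth x0 c (if i.+1 < size c then i.+1 else 0)).
Proof.
move=> /(sortedP x0) sc cl ilt; case: ifP => h.
  by apply/eqP; apply: sc.
have -> : i = (size c).-1 by lia.
by rewrite nth_last nth0; apply/eqP.
Qed.

Lemma cyc_alpha c x : sorted nbr c -> cr (last x c) (head x c) -> uniq (map vtx c) ->
  x \in c -> alpha x \in c -> alpha x = x.
Proof.
move=> sn cl u xc axc.
have sc := sorted_nbr_cr sn.
set k := size c.
have hj : index x c < k by rewrite index_mem.
have hm : index (alpha x) c < k by rewrite index_mem.
have nj : nth x c (index x c) = x by rewrite nth_index.
have nm : nth x c (index (alpha x) c) = alpha x by rewrite nth_index.
have injv : forall i i', i < k -> i' < k -> vtx (nth x c i) = vtx (nth x c i') -> i = i'.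
  move=> i i' hi hi' e; apply/eqP; rewrite -(nth_uniq (vtx x) _ _ u) ?size_map //.
  by rewrite !(nth_map x) // e.
set j := index x c in hj nj *; set m := index (alpha x) c in hm nm *.
have e1 := succ_vtx sc cl hj; rewrite nj -nm in e1.
have e2 : vtx (nth x c j) = vtx (nth x c (if m.+1 < k then m.+1 else 0)).
  by rewrite nj -[in LHS](alphaK x) -nm; exact: succ_vtx.
have sk : forall i, (if i.+1 < k then i.+1 else 0) < k.
  by move=> i; case: ifP => // _; lia.
have E1 : m = (if j.+1 < k then j.+1 else 0) by apply: injv.
have E2 : j = (if m.+1 < k then m.+1 else 0) by apply: injv.
case: (eqVneq m j) => [mj|mnj]; first by rewrite -nm mj nj.
have k2 : k = 2.
  move: E1 E2; case: ifP => h1; case: ifP => h2 E1 E2; lia.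
clearbody j m; rewrite /k in k2 hj hm.
move: sn hj hm nj nm mnj; clear -k2 alphaK.
case: c k2 => [|a [|b [|? ?]]] //= _.
rewrite andbT => /andP[_ nab].
case: j m => [|[|j]] [|[|m]] //= _ _ ?? _; subst;
  by rewrite ?alphaK eqxx in nab.
Qed.

Lemma cyc_edge_uniq c x0 : sorted nbr c -> cr (last x0 c) (head x0 c) ->
  uniq (map vtx c) -> uniq (map edge c).
Proof.
move=> sn cl u; rewrite map_inj_in_uniq; first exact: map_uniq u.
move=> x y xc yc exy.
have : y \in edge y by rewrite /edge_of !inE eqxx.
rewrite -exy /edge_of !inE => /orP[/eqP //|/eqP yx].
have cl' : cr (last x c) (head x c).
  by case: (c) cl xc => //.
by rewrite yx (cyc_alpha sn cl' u xc) //; rewrite -yx.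
Qed.

Lemma extract q x0 i : sorted nbr q -> uniq (map vtx q) -> i < size q ->
  vtx (alpha (last x0 q)) = vtx (nth x0 q i) -> graph_cycle alpha sigma (drop i q).
Proof.
move=> sn u iq e.
have sn' := sorted_drop i sn.
have u' : uniq (map vtx (drop i q)) by rewrite map_drop drop_uniq.
have cl : cr (last x0 (drop i q)) (head x0 (drop i q)).
  by rewrite last_drop // -nth0 nth_drop addn0 /cr e.
apply/and4P; split.
- by rewrite -size_eq0 size_drop subn_eq0 -ltnNge.
- move: sn' cl; case: (drop i q) => //= a s sn' cl.
  rewrite rcons_path; apply/andP; split; last exact: cl.
  by apply: sub_path sn' => y z /andP[].
- exact: u'.
- exact: cyc_edge_uniq cl u'.
Qed.

Section Walk.
Variables (od exc : pred D).
Hypothesis stepH : forall g, od g -> ~~ exc (alpha g) ->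
  exists g', [/\ vtx g' = vtx (alpha g), od g' & g' != alpha g].

Definition walk_concl (g0 : D) :=
  (exists c, graph_cycle alpha sigma c /\ all od c) \/
  (exists p', [/\ path nbr g0 p', all od (g0 :: p'),
      uniq (map vtx (g0 :: p') ++ [:: vtx (alpha (last g0 p'))]),
      exc (alpha (last g0 p')) & all (fun g => ~~ exc (alpha g)) (belast g0 p')]).

Lemma walk_stop g0 p' : path nbr g0 p' -> all od (g0 :: p') -> uniq (map vtx (g0 :: p')) ->
  all (fun g => ~~ exc (alpha g)) (belast g0 p') ->
  (vtx (alpha (last g0 p')) \in map vtx (g0 :: p')) || exc (alpha (last g0 p')) ->
  walk_concl g0.
Proof.
move=> pa ao u ae /orP[inq|ex].
  left; set q := g0 :: p'.
  set i := index (vtx (alpha (last g0 p'))) (map vtx q).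
  have iq : i < size q by rewrite -(size_map vtx) index_mem.
  exists (drop i q); split.
    apply: (extract (x0 := g0)) => //.
    rewrite -(nth_map g0 (vtx g0)) // nth_index //.
  by apply/allP => x /mem_drop xq; move/allP: ao; apply.
case ih : (vtx (alpha (last g0 p')) \in map vtx (g0 :: p')).
  left; set q := g0 :: p'.
  set i := index (vtx (alpha (last g0 p'))) (map vtx q).
  have iq : i < size q by rewrite -(size_map vtx) index_mem.
  exists (drop i q); split.
    apply: (extract (x0 := g0)) => //.
    rewrite -(nth_map g0 (vtx g0)) // nth_index //.
  by apply/allP => x /mem_drop xq; move/allP: ao; apply.
right; exists p'; split => //.
by rewrite cats1 rcons_uniq ih.
Qed.

Lemma walk_aux n g0 p' : #|{set D}| - size p' <= n -> path nbr g0 p' -> all od (g0 :: p') ->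
  uniq (map vtx (g0 :: p')) -> all (fun g => ~~ exc (alpha g)) (belast g0 p') ->
  walk_concl g0.
Proof.
elim: n p' => [|n IH] p' hn pa ao u ae;
  (case: (boolP ((vtx (alpha (last g0 p')) \in map vtx (g0 :: p')) || exc (alpha (last g0 p'))))
     => [/(walk_stop pa ao u ae) // | ]; rewrite negb_or => /andP[ni ne]);
  (have odl : od (last g0 p') by move/allP: ao; apply; exact: mem_last);
  have [g' [vg' odg' ng']] := stepH odl ne;
  have u' : uniq (map vtx (g0 :: rcons p' g')) by
    rewrite -rcons_cons map_rcons rcons_uniq vg' ni.
  all: have := card_uniqP u'; rewrite size_map /= size_rcons => cs;
    have cs' : (size p').+2 <= #|{set D}| by rewrite -cs; exact: max_card.
  by lia.
apply: (IH (rcons p' g')).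
- by rewrite size_rcons; lia.
- by rewrite rcons_path pa /nbr /cr vg' eqxx ng'.
- by rewrite -rcons_cons all_rcons odg' ao.
- exact: u'.
- by rewrite belast_rcons lastI all_rcons ne ae.
Qed.

Lemma walk g0 : od g0 -> walk_concl g0.
Proof.
move=> od0; apply: (walk_aux (n := #|{set D}|) (p' := [::])) => //=.
  by rewrite subn0.
by rewrite od0.
Qed.
End Walk.

Section Tree.
Definition trel (A : {set D}) : rel D :=
  fun a b => [|| b == sigma a, a == sigma b | (a \in A) && (b == alpha a)].
Definition aclosed (A : {set D}) := forall x, x \in A -> alpha x \in A.

Lemma trel_sym A : aclosed A -> connect_sym (trel A).
Proof.
move=> cA; apply: sym_connect_sym => a b; rewrite /trel.
apply/idP/idP => /or3P[->|->|/andP[Aa /eqP E]]; rewrite ?orbT //;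
  by rewrite E alphaK cA ?eqxx ?orbT.
Qed.

Definition cl A x := [set y | connect (trel A) x y].
Definition ncl A := #|[set cl A x | x : D]|.

Lemma connect_inv (e : rel D) (P : pred D) x y :
  (forall a b, P a -> e a b -> P b) -> P x -> connect e x y -> P y.
Proof.
move=> st Px /connectP[p pa ->]; elim: p x pa Px => //= z p IH x /andP[exz pa] Px.
exact: IH pa (st _ _ Px exz).
Qed.

Lemma conn_vtx A x y : y \in vtx x -> connect (trel A) x y.
Proof.
case/porbitP => i ->; elim: i => [|i IH]; first by rewrite expg0 perm1 connect0.
rewrite expgSr permM; apply: connect_trans IH _; apply: connect1.
by rewrite /trel eqxx.
Qed.

Lemma cl0 x : cl set0 x = vtx x.
Proof.
apply/setP => y; rewrite inE; apply/idP/idP; last exact: conn_vtx.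
apply: (connect_inv (P := fun z => z \in vtx x)); last exact: vtx_id.
move=> a b av /or3P[/eqP->|/eqP ae|]; last by rewrite inE.
  by rewrite -vtx_eqE vtxS vtx_eqE.
by move: av; rewrite ae -vtx_eqE vtxS vtx_eqE.
Qed.

Lemma ncl0 : ncl set0 = #|porbits sigma|.
Proof.
rewrite /ncl /porbits; apply: eq_card => K.
apply/imsetP/imsetP => -[x _ ->]; exists x => //; by rewrite cl0.
Qed.

Lemma key A a x y : aclosed A -> connect (trel (A :|: [set a; alpha a])) x y ->
  [|| connect (trel A) x y,
      connect (trel A) x a && connect (trel A) (alpha a) y |
      connect (trel A) x (alpha a) && connect (trel A) a y].
Proof.
move=> cA; apply: (connect_inv (P := fun z => [|| connect (trel A) x z,
      connect (trel A) x a && connect (trel A) (alpha a) z |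
      connect (trel A) x (alpha a) && connect (trel A) a z])); last by rewrite connect0.
have ext u b c : connect (trel A) u b -> trel A b c -> connect (trel A) u c.
  by move=> h t; apply: connect_trans h (connect1 t).
move=> b c Pb tA'.
case tb : (trel A b c).
  by case/or3P: Pb => [h|/andP[h1 h2]|/andP[h1 h2]];
    rewrite ?(ext _ _ _ h tb) ?(ext _ _ _ h2 tb) ?h1 ?orbT.
move: tA'; rewrite /trel; case/or3P => [e|e|/andP[]].
- by move: tb; rewrite /trel e.
- by move: tb; rewrite /trel e orbT.
rewrite !inE => /orP[Ab|/orP[/eqP ba|/eqP ba]] /eqP E; subst c.
- by move: tb; rewrite /trel Ab eqxx !orbT.
- subst b; case/or3P: Pb => [h|/andP[h _]|/andP[h _]].
  + by apply/or3P; apply: Or32; rewrite h connect0.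
  + by apply/or3P; apply: Or32; rewrite h connect0.
  + by apply/or3P; apply: Or31.
- subst b; rewrite alphaK; case/or3P: Pb => [h|/andP[h _]|/andP[h _]].
  + by apply/or3P; apply: Or33; rewrite h connect0.
  + by apply/or3P; apply: Or31.
  + by apply/or3P; apply: Or33; rewrite h connect0.
Qed.

Lemma clP A x y : aclosed A -> (cl A x == cl A y) = connect (trel A) x y.
Proof.
move=> cA; apply/eqP/idP => [E|c].
  have : y \in cl A y by rewrite inE connect0.
  by rewrite -E inE.
apply/setP => z; rewrite !inE; apply/idP/idP => h.
  by apply: connect_trans h; rewrite (trel_sym cA).
exact: connect_trans c h.
Qed.

Lemma sub_trel (A B : {set D}) : A \subset B -> subrel (connect (trel A)) (connect (trel B)).
Proof.
move=> sAB; apply: connect_sub => a b t; apply: connect1; move: t.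
rewrite /trel => /or3P[->|->|/andP[aA /eqP ->]]; rewrite ?orbT //.
by rewrite (subsetP sAB _ aA) eqxx !orbT.
Qed.

Lemma aclosedD2 A a : aclosed A -> aclosed (A :\ a :\ alpha a).
Proof.
move=> cA z; rewrite !inE => /and3P[z1 z2 zA].
rewrite cA // andbT (inj_eq perm_inj) z2 /=.
by apply: contra z1 => /eqP <-; rewrite alphaK.
Qed.

Lemma splitA A a : aclosed A -> a \in A -> A = (A :\ a :\ alpha a) :|: [set a; alpha a].
Proof.
move=> cA aA; apply/setP => z; rewrite !inE.
case: (eqVneq z (alpha a)) => [->|]; rewrite ?cA ?orbT //=.
by case: (eqVneq z a) => [->|]; rewrite ?aA ?orbT //= orbF.
Qed.

Lemma cardD2 A a : aclosed A -> a \in A -> alpha a != a -> #|A| = #|A :\ a :\ alpha a| + 2.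
Proof.
move=> cA aA fa.
rewrite (cardsD1 a A) aA (cardsD1 (alpha a) (A :\ a)) !inE fa cA //=.
lia.
Qed.

Lemma ncl_add A a : aclosed A -> ncl A <= ncl (A :|: [set a; alpha a]) + 1.
Proof.
move=> cA; set A' := A :|: [set a; alpha a].
have cA' : aclosed A'.
  move=> z; rewrite !inE => /or3P[/cA ->|/eqP->|/eqP->]; by rewrite ?alphaK ?eqxx ?orbT.
set S := [set cl A x | x : D]; set S' := [set cl A' x | x : D].
pose F (K : {set D}) := odflt set0 (omap (cl A') [pick z in K]).
have FE x : F (cl A x) = cl A' x.
  rewrite /F; case: pickP => [z|/(_ x)]; last by rewrite inE connect0.
  rewrite inE => h /=; apply/eqP; rewrite (clP _ _ cA') (trel_sym cA').
  exact: sub_trel (subsetUl _ _) _ _ h.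
have S0inj : {in S :\ cl A (alpha a) &, injective F}.
  move=> K1 K2; rewrite !inE => /andP[n1 /imsetP[x1 _ E1]] /andP[n2 /imsetP[x2 _ E2]]; subst K1 K2.
  rewrite !FE => /eqP; rewrite clP // => /(key cA) /or3P[h|/andP[_ h]|/andP[h _]].
  - by apply/eqP; rewrite clP.
  - by move: n2; rewrite clP // (trel_sym cA) h.
  - by move: n1; rewrite clP // h.
have le1 : #|S| <= #|S :\ cl A (alpha a)| + 1.
  have := cardsD1 (cl A (alpha a)) S; have := leq_b1 (cl A (alpha a) \in S); lia.
have le2 : #|S :\ cl A (alpha a)| <= #|S'|.
  rewrite -(card_in_imset S0inj); apply: subset_leq_card; apply/subsetP => K.
  case/imsetP => K0 /setD1P[_ /imsetP[x _ ->]] ->; rewrite FE.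
  by apply/imsetP; exists x.
rewrite /ncl -/S -/S'; lia.
Qed.

Lemma ncl_same A a : aclosed A -> connect (trel A) a (alpha a) ->
  ncl (A :|: [set a; alpha a]) = ncl A.
Proof.
move=> cA caa; rewrite /ncl.
have E x : cl (A :|: [set a; alpha a]) x = cl A x.
  apply/setP => y; rewrite !inE; apply/idP/idP => [/(key cA) /or3P[//|/andP[h1 h2]|/andP[h1 h2]]|h].
  - exact: connect_trans h1 (connect_trans caa h2).
  - apply: connect_trans h1 _; apply: connect_trans _ h2; by rewrite (trel_sym cA).
  - exact: sub_trel (subsetUl _ _) _ _ h.
by apply: eq_card => K; apply/imsetP/imsetP => -[x _ ->]; exists x => //; rewrite E.
Qed.

Lemma ncl_bound (A : {set D}) : aclosed A -> (forall x, x \in A -> alpha x != x) ->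
  2 * #|porbits sigma| <= 2 * ncl A + #|A|.
Proof.
have [n] := ubnP #|A|; elim: n A => // n IH A hn cA fA.
case: (set_0Vmem A) => [->|[a aA]]; first by rewrite ncl0 cards0; lia.
have fa := fA a aA.
have cA0 := aclosedD2 (a := a) cA.
have cardA0 := cardD2 cA aA fa.
have h1 := ncl_add a cA0; rewrite -splitA // in h1.
have h2 : 2 * #|porbits sigma| <= 2 * ncl (A :\ a :\ alpha a) + #|A :\ a :\ alpha a|.
  apply: IH cA0 _; first by lia.
  by move=> z; rewrite !inE => /and3P[_ _ /fA].
lia.
Qed.

Lemma chain (A : {set D}) g0 p : path cr g0 p -> all (mem A) (g0 :: p) ->
  connect (trel A) g0 (alpha (last g0 p)).
Proof.
elim: p g0 => [|y p IH] g0 /=.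
  rewrite andbT => _ g0A; apply: connect1; by rewrite /trel g0A eqxx !orbT.
move=> /andP[cy pa] /andP[g0A ap].
apply: connect_trans (IH y pa ap).
apply: connect_trans (connect1 (_ : trel A g0 (alpha g0))) _.
  by rewrite /trel g0A eqxx !orbT.
by apply: conn_vtx; rewrite -vtx_eqE eq_sym.
Qed.

Lemma tree_contra (bud : pred D) e : plane_tree_buds bud alpha sigma -> ~~ bud e ->
  connect (trel ([set h | ~~ bud h] :\ e :\ alpha e)) e (alpha e) -> False.
Proof.
case=> budf nbudf _ conn V ne c.
set full := [set h | ~~ bud h].
have nbA h : ~~ bud h -> ~~ bud (alpha h).
  move=> nh; apply/negP => /budf; rewrite alphaK => E.
  by move: (nbudf h nh); rewrite -E eqxx.
have cF : aclosed full by move=> h; rewrite !inE; exact: nbA.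
have eF : e \in full by rewrite inE.
have fe := nbudf e ne.
have cA0 := aclosedD2 (a := e) cF.
have h1 : ncl full = ncl (full :\ e :\ alpha e) by rewrite {1}(splitA cF eF) ncl_same.
have h2 : ncl full <= 1.
  rewrite /ncl; apply: leq_trans (_ : #|[set setT : {set D}]| <= 1); last by rewrite cards1.
  apply: subset_leq_card; apply/subsetP => K /imsetP[x _ ->]; rewrite inE.
  apply/eqP/setP => y; rewrite !inE.
  apply: (@connect_sub _ (dmove alpha sigma) (trel full) _ x y (conn x y)) => a b /orP[/eqP->|/eqP->].
    by apply: connect1; rewrite /trel eqxx.
  case ba: (bud a); first by rewrite (budf _ ba) connect0.
  by apply: connect1; rewrite /trel inE ba eqxx /= !orbT.
have cardF := cardD2 cF eF fe.
have h3' : 2 * #|porbits sigma| <= 2 * ncl (full :\ e :\ alpha e) + #|full :\ e :\ alpha e|.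
  by apply: ncl_bound cA0 _ => z; rewrite !inE => /and3P[_ _]; exact: nbudf.
rewrite V -/full in h3'.
have := divn_eq #|full| 2; have := ltn_pmod #|full| (isT : 0 < 2).
lia.
Qed.
End Tree.
End Gen.

Lemma odd_other (D : finType) (A : {set D}) (P : pred D) (w : D -> nat) x :
  ~~ odd (\sum_(g in A | P g) w g) -> x \in A -> P x -> odd (w x) ->
  exists g, [/\ g \in A, P g, odd (w g) & g != x].
Proof.
move=> ev xA Px ox.
case: (boolP [exists g, [&& g \in A, P g, odd (w g) & g != x]]) => [/existsP[g /and4P[]]|ne].
  by move=> *; exists g.
exfalso; move: ev; rewrite (bigD1 x) /=; last by rewrite xA Px.
rewrite oddD ox /= negbK.
apply/negP; apply: (big_ind (fun n => ~~ odd n)) => //.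
  by move=> m n hm hn; rewrite oddD (negbTE hm) (negbTE hn).
move=> g /andP[/andP[gA Pg] gx]; apply/negP => og.
by move/existsP: ne; apply; exists g; rewrite gA Pg og gx.
Qed.

Section Part1.
Variable H : finType.
Variables (bud : pred H) (alpha sigma : {perm H}) (black : {set H} -> bool) (w : H -> nat).
Variables (b q : nat) (hs : H).
Hypothesis b2 : 2 <= b.
Hypothesis BM : branching_mobile bud alpha sigma black w (2 * q) (2 * b) hs.
Local Notation vtx := (Defs.vtx sigma).

Lemma part1 h : ~~ bud h -> ~~ odd (w h).
Proof.
move=> nbh.
case: BM => pt budblack posw edgew [[bs _ _] _ ww _].
have alphaK : involutive alpha by case: pt.
case: (pt) => budf nbudf _ _ _.
have nbA g : ~~ bud g -> ~~ bud (alpha g).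
  move=> nh; apply/negP => /budf; rewrite alphaK => E.
  by move: (nbudf g nh); rewrite -E eqxx.
have ev2 : ~~ odd (2 * b - 2) by rewrite (_ : 2 * b - 2 = (b - 1).*2) ?odd_double //; lia.
have oddA g : ~~ bud g -> odd (w (alpha g)) = odd (w g).
  move=> ng; move: ev2; rewrite -(edgew g ng) oddD.
  by case: (odd (w g)); case: (odd (w (alpha g))).
have white g : ~~ bud g -> odd (w g) -> ~~ black (vtx g).
  by move=> ng og; rewrite -(posw g ng) odd_gt0.
pose od g := ~~ bud g && odd (w g).
pose exc g := adjacent_to bud alpha sigma g hs.
have odA g : od g -> od (alpha g).
  by case/andP => ng og; rewrite /od nbA // oddA.
have stepH g : od g -> ~~ exc (alpha g) ->
    exists g', [/\ vtx g' = vtx (alpha g), od g' & g' != alpha g].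
  move=> /odA /andP[nag oag] ne.
  have ev : ~~ odd (vweight bud w (vtx (alpha g))).
    by rewrite ww ?mul2n ?odd_double //; apply: white.
  have [g' [g'in ng' og' g'ne]] := odd_other ev (vtx_id _ _) nag oag.
  exists g'; split => //; last by rewrite /od ng'.
  by apply/eqP; rewrite vtx_eqE.
have inA0 e g : black (vtx e) -> ~~ bud e -> od g -> g \in [set h | ~~ bud h] :\ e :\ alpha e.
  move=> be ne /andP[ng og]; rewrite !inE ng andbT.
  have we : w e = 0 by apply/eqP; rewrite -leqn0 leqNgt posw // be.
  apply/andP; split; apply: contraTneq og => ->.
    by rewrite oddA // we.
  by rewrite we.
have cyc_contra c : graph_cycle alpha sigma c -> all od c -> False.
  case/and4P; case: c => [//|x s] _ cy uv ue ao.
  have ux : uniq (x :: s) := map_uniq uv.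
  move: ao => /= /andP[ox aos].
  have nx : ~~ bud x by case/andP: ox.
  have cF : aclosed alpha [set h | ~~ bud h] by move=> z; rewrite !inE; exact: nbA.
  have cA0 := aclosedD2 alphaK (a := x) cF.
  set A0 := [set h | ~~ bud h] :\ x :\ alpha x in cA0 *.
  have sA0 : all (mem A0) s.
    apply/allP => y ys; rewrite !inE.
    have /andP[-> _] : od y by move/allP: aos; apply.
    rewrite andbT; apply/andP; split.
      apply: contraTneq ue => yx; rewrite /= negb_and negbK; apply/orP; left.
      by apply/mapP; exists y => //; rewrite yx /edge_of alphaK setUC.
    by apply: contraTneq ux => <-; rewrite /= ys.
  have main : connect (trel alpha sigma A0) (alpha x) x.
    move: cy; rewrite /= rcons_path => /andP[pa cl].
    case: s pa cl sA0 {aos ue ux uv} => [|y s'] /= pa cl sA0.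
      by apply: conn_vtx; rewrite -vtx_eqE eq_sym.
    case/andP: pa => xy pa.
    apply: connect_trans (conn_vtx _ _ _) (connect_trans (chain pa sA0) (conn_vtx _ _ _)).
      by rewrite -vtx_eqE eq_sym.
    by rewrite -vtx_eqE eq_sym.
  apply: (tree_contra alphaK pt nx).
  by rewrite (trel_sym _ alphaK cA0).
apply/negP => oh.
have odh : od h by rewrite /od nbh oh.
have [[c [gc ac]]|[p0 [pa0 ao0 u0 ex0 ae0]]] := walk alphaK stepH odh.
  exact: cyc_contra gc ac.
set g1 := alpha (last h p0) in ex0.
have odg1 : od g1 by apply: odA; move/allP: ao0; apply; exact: mem_last.
have [[c [gc ac]]|[p1 [pa1 ao1 u1 ex1 ae1]]] := walk alphaK stepH odg1.
  exact: cyc_contra gc ac.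
case/existsP: ex0 => ga /andP[gain /andP[nga aga]].
case/existsP: ex1 => gb /andP[gbin /andP[ngb agb]].
set l1 := last g1 p1 in u1 gbin agb.
set e := alpha gb.
have ne : ~~ bud e by apply: nbA.
have ve : vtx e = vtx hs by apply/eqP; rewrite vtx_eqE.
have be : black (vtx e) by rewrite ve.
have cF : aclosed alpha [set h | ~~ bud h] by move=> z; rewrite !inE; exact: nbA.
have cA0 := aclosedD2 alphaK (a := e) cF.
set A0 := [set h | ~~ bud h] :\ e :\ alpha e in cA0 *.
have odl1a : od (alpha l1) by apply: odA; move/allP: ao1; apply; exact: mem_last.
have wh : ~~ black (vtx (alpha l1)) by case/andP: odl1a => ??; apply: white.
have vgb : vtx gb = vtx (alpha l1) by apply/eqP; rewrite vtx_eqE.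
have vga : vtx ga = vtx g1 by apply/eqP; rewrite vtx_eqE.
have dif : vtx g1 != vtx (alpha l1).
  move: u1; rewrite cats1 rcons_uniq => /andP[nin _]; apply: contraNneq nin => <-.
  by rewrite inE eqxx.
have gaA0 : alpha ga \in A0.
  rewrite !inE nbA // andbT /e alphaK; apply/andP; split.
    apply: contraNneq wh => E; rewrite -vgb -E.
    by have /eqP -> : vtx (alpha ga) == vtx hs by rewrite vtx_eqE.
  by rewrite (inj_eq perm_inj); apply: contraNneq dif => E; rewrite -vga E vgb.
have conn : connect (trel alpha sigma A0) e (alpha e).
  apply: connect_trans (_ : connect _ e (alpha ga)) _.
    by apply: conn_vtx; rewrite -vtx_eqE ve vtx_eqE.
  apply: connect_trans (connect1 (_ : trel alpha sigma A0 (alpha ga) ga)) _.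
    by rewrite /trel gaA0 alphaK eqxx !orbT.
  apply: connect_trans (_ : connect _ ga g1) _.
    by apply: conn_vtx; rewrite -vtx_eqE vga.
  have pc : path (cr alpha sigma) g1 p1 by apply: sub_path pa1 => ?? /andP[].
  have aA : all (mem A0) (g1 :: p1).
    by apply/allP => z zin; apply: inA0 => //; move/allP: ao1; apply.
  apply: connect_trans (chain pc aA) _.
  by rewrite /e alphaK; apply: conn_vtx; rewrite -vtx_eqE vgb.
exact: (tree_contra alphaK pt ne conn).
Qed.
End Part1.

Lemma odd_other2 (D : finType) (A : {set D}) (w : D -> nat) x :
  ~~ odd (\sum_(g in A) w g) -> x \in A -> odd (w x) ->
  exists g, [/\ g \in A, odd (w g) & g != x].
Proof.
move=> ev xA ox.
case: (boolP [exists g, [&& g \in A, odd (w g) & g != x]]) => [/existsP[g /and3P[]]|ne].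
  by move=> *; exists g.
exfalso; move: ev; rewrite (bigD1 x) //=.
rewrite oddD ox /= negbK.
apply/negP; apply: (big_ind (fun n => ~~ odd n)) => //.
  by move=> m n hm hn; rewrite oddD (negbTE hm) (negbTE hn).
move=> g /andP[gA gx]; apply/negP => og.
by move/existsP: ne; apply; exists g; rewrite gA og gx.
Qed.

Section G2.
Variable D : finType.
Variables alpha sigma : {perm D}.
Hypothesis alphaK : involutive alpha.
Local Notation vtx := (Defs.vtx sigma).

Lemma ror_step c y z : root_on_right alpha sigma y c -> right_move alpha sigma c y z ->
  root_on_right alpha sigma z c.
Proof.
rewrite /root_on_right => /hasP[h hc con] st; apply/hasP; exists h => //.
exact: connect_trans con (connect1 st).
Qed.

Lemma RR_all (c1 c2 : seq D) (S : pred D) :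
  (forall x, S x -> S (alpha x)) ->
  (forall x, ~~ S x -> [&& x \notin c1, alpha x \notin c1, x \notin c2 & alpha x \notin c2]) ->
  (forall x, S x -> root_on_right alpha sigma x c1 || root_on_right alpha sigma x c2) ->
  (exists x0, S x0) ->
  (forall x y, connect (dmove alpha sigma) x y) ->
  forall r, root_on_right alpha sigma r c1 || root_on_right alpha sigma r c2.
Proof.
move=> SA free SR [x0 Sx0] conn r.
have phiE a : ((alpha * sigma)%g a) = sigma (alpha a) by rewrite permM.
have ext y z : root_on_right alpha sigma y c1 || root_on_right alpha sigma y c2 ->
    right_move alpha sigma c1 y z -> right_move alpha sigma c2 y z ->
    root_on_right alpha sigma z c1 || root_on_right alpha sigma z c2.
  by case/orP => h s1 s2; rewrite (ror_step h) ?orbT.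
apply: (connect_inv (P := fun z => root_on_right alpha sigma z c1 || root_on_right alpha sigma z c2)) (conn x0 r); last exact: SR.
move=> a b Ra /orP[/eqP->|/eqP->]; last first.
  case Sa: (S a); first exact/SR/SA.
  have /and4P[n1 n2 n3 n4] := free _ (negbT Sa).
  by apply: ext Ra _ _; rewrite /right_move eqxx ?n1 ?n2 ?n3 ?n4 orbT.
have -> : sigma a = (alpha * sigma)%g (alpha a) by rewrite phiE alphaK.
case Sa: (S a).
  by apply: ext (SR _ (SA _ Sa)) _ _; rewrite /right_move eqxx.
have /and4P[n1 n2 n3 n4] := free _ (negbT Sa).
have R' : root_on_right alpha sigma (alpha a) c1 || root_on_right alpha sigma (alpha a) c2.
  by apply: ext Ra _ _; rewrite /right_move eqxx ?n1 ?n2 ?n3 ?n4 orbT.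
by apply: ext R' _ _; rewrite /right_move eqxx.
Qed.

Lemma path_heads x s y : path (cr alpha sigma) x (rcons s y) ->
  map (fun g => vtx (alpha g)) (x :: s) = rcons (map vtx s) (vtx y).
Proof.
elim: s x => [|z s IH] x /=; first by rewrite andbT => /eqP ->.
by case/andP => /eqP -> /IH /= ->.
Qed.

Lemma rev_graph_cycle c : graph_cycle alpha sigma c -> graph_cycle alpha sigma (map alpha (rev c)).
Proof.
case/and4P => ne cy uv ue; apply/and4P; split.
- by rewrite -size_eq0 size_map size_rev size_eq0.
- rewrite cycle_map rev_cycle.
  rewrite (eq_cycle (e' := fun g g' => vtx (alpha g) == vtx g')) // => x y /=.
  by rewrite alphaK eq_sym.
- rewrite -map_comp map_rev rev_uniq.
  case: c ne cy uv {ue} => [//|x s] _ cy uv.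
  have := path_heads (y := x) (s := s) cy.
  rewrite /comp => ->; by rewrite -rot1_cons rot_uniq.
- have -> : map (edge_of alpha) (map alpha (rev c)) = map (edge_of alpha) (rev c).
    by rewrite -map_comp; apply: eq_map => x; rewrite /comp /edge_of alphaK setUC.
  by rewrite map_rev rev_uniq.
Qed.

Lemma mem_revA c x : (x \in map alpha (rev c)) = (alpha x \in c).
Proof. by rewrite -{1}(alphaK x) mem_map ?mem_rev //; exact: perm_inj. Qed.

End G2.

Lemma porbit_fcon (D : finType) (s : {perm D}) x y : (y \in porbit s x) = fconnect s x y.
Proof.
apply/porbitP/idP => [[i ->]|]; first by rewrite permX fconnect_iter.
rewrite fconnect_orbit => /trajectP[i _ ->]; exists i; by rewrite permX.
Qed.

Section Part2.
Variable D : finType.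
Variables (alpha sigma : {perm D}) (hb r : D) (w : D -> nat) (b q : nat).
Hypothesis b2 : 2 <= b.
Hypothesis AD : annular_dangulation alpha sigma (2 * q) (2 * b) hb r.
Hypothesis PO : pseudo_orientation alpha sigma (2 * b) hb w.
Hypothesis MO : minimal_orientation alpha sigma w r.
Local Notation vtx := (Defs.vtx sigma).
Local Notation phi := (alpha * sigma)%g.
Local Notation F := (fface alpha sigma hb).

Lemma alphaK : involutive alpha.
Proof. by case: AD => [[]]. Qed.

Lemma conn : forall x y, connect (dmove alpha sigma) x y.
Proof. by case: AD => [[]]. Qed.

Lemma phiE x : phi x = sigma (alpha x).
Proof. by rewrite permM. Qed.

Lemma vtx_phi x : vtx (phi x) = vtx (alpha x).
Proof. by rewrite phiE vtxS. Qed.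

Lemma F_phi x : x \in F -> phi x \in F.
Proof.
rewrite /fface => xF; rewrite -(eqP (_ : porbit phi x == porbit phi hb)); last by rewrite eq_porbit_mem.
by have := mem_porbit phi 1 x; rewrite expg1.
Qed.

Lemma wF x : x \in F -> w x = 0 /\ 0 < w (alpha x).
Proof. by case: PO => _ _; apply. Qed.

Lemma ev2 : ~~ odd (2 * b - 2).
Proof. by rewrite (_ : 2 * b - 2 = (b - 1).*2) ?odd_double //; lia. Qed.

Lemma oddA g : odd (w (alpha g)) = odd (w g).
Proof.
case: PO => ew _ _; move: ev2; rewrite -(ew g) oddD.
by case: (odd (w g)); case: (odd (w (alpha g))).
Qed.

Lemma evF x : x \in F -> ~~ odd (w x).
Proof. by case/wF => ->. Qed.

Lemma evFa x : x \in F -> ~~ odd (w (alpha x)).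
Proof. by rewrite oddA; exact: evF. Qed.

Definition od g := odd (w g).
Definition exc g := [exists g' in F, vtx g' == vtx g].

Lemma stepH g : od g -> ~~ exc (alpha g) ->
  exists g', [/\ vtx g' = vtx (alpha g), od g' & g' != alpha g].
Proof.
move=> og ne.
have inn : forall g', g' \in F -> vtx g' != vtx (alpha g).
  by move=> g' g'F; apply: contraNneq ne => E; apply/existsP; exists g'; rewrite g'F E eqxx.
have ev : ~~ odd (\sum_(g' in vtx (alpha g)) w g').
  by case: PO => _ hv _; rewrite hv ?mul2n ?odd_double.
have oag : odd (w (alpha g)) by rewrite oddA.
have [g' [g'in og' g'ne]] := odd_other2 ev (vtx_id _ _) oag.
by exists g'; split => //; apply/eqP; rewrite vtx_eqE.
Qed.

Lemma directed_odd c : all od c -> all (fun g => 0 < w (alpha g)) c.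
Proof. by move/allP => h; apply/allP => g /h og; rewrite odd_gt0 // oddA. Qed.

Lemma cyc_contra c : graph_cycle alpha sigma c -> all od c -> False.
Proof.
move=> gc ac.
have ak := alphaK.
set c' := map alpha (rev c).
have gc' : graph_cycle alpha sigma c' := rev_graph_cycle ak gc.
have ac' : all od c'.
  by rewrite /c' all_map all_rev; apply/allP => g /(allP ac) og /=; rewrite /od oddA.
pose S := fun x => (x \in c) || (alpha x \in c).
have h1 : forall x, S x -> S (alpha x) by move=> x; rewrite /S ak orbC.
have h2 : forall x, ~~ S x -> [&& x \notin c, alpha x \notin c, x \notin c' & alpha x \notin c'].
  by move=> x; rewrite /S negb_or /c' !(mem_revA ak) ak => /andP[-> ->].
have h3 : forall x, S x -> root_on_right alpha sigma x c || root_on_right alpha sigma x c'.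
  move=> x /orP[xc|axc].
    by apply/orP; left; apply/hasP; exists x => //.
  by apply/orP; right; apply/hasP; exists x; rewrite ?(mem_revA ak).
have h4 : exists x0, S x0.
  case/and4P: gc => ne _ _ _; case E: c ne => // [x s] _; exists x.
  by rewrite /S E inE eqxx.
case/orP: (RR_all (sigma := sigma) ak h1 h2 h3 h4 conn r).
- by apply/negP/MO; rewrite /directed_circuit gc directed_odd.
- by apply/negP/MO; rewrite /directed_circuit gc' directed_odd.
Qed.

Lemma injF : {in F &, injective vtx}.
Proof. by case: AD. Qed.

Lemma FP x : x \in F -> porbit phi x = F.
Proof. by move=> xF; apply/eqP; rewrite eq_porbit_mem. Qed.

Lemma nbr_phi z : z \in F -> nbr alpha sigma z (phi z).
Proof.
move=> zF; rewrite /nbr /cr vtx_phi eqxx /=.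
apply/negP => /eqP E; have := F_phi zF; rewrite E => /wF[w0 _].
by case: (wF zF) => _; rewrite w0.
Qed.

Lemma arc_path z m : z \in F -> path (nbr alpha sigma) z (traject phi (phi z) m).
Proof.
elim: m z => [|m IH] z zF //=.
by rewrite nbr_phi //= IH // F_phi.
Qed.

Lemma tails_heads x s : path (cr alpha sigma) x s ->
  map vtx s = map (fun g => vtx (alpha g)) (belast x s).
Proof.
elim: s x => [|y s IH] x //= /andP[/eqP e pa].
by rewrite e (IH _ pa).
Qed.

Lemma heads x s : path (cr alpha sigma) x s ->
  map (fun g => vtx (alpha g)) (x :: s) = rcons (map vtx s) (vtx (alpha (last x s))).
Proof.
elim: s x => [|y s IH] x //= /andP[/eqP e pa].
by rewrite e -(IH _ pa).
Qed.

Lemma rev_nbr s : sorted (nbr alpha sigma) s -> sorted (nbr alpha sigma) (map alpha (rev s)).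
Proof.
have ak := alphaK.
rewrite sorted_map rev_sorted; case: s => [//|x s].
rewrite /sorted; apply: sub_path => u v /andP[/eqP e ne].
rewrite /relpre /nbr /cr /= ak e eqxx /=.
by rewrite eq_sym.
Qed.

Lemma path_contra g1 p1 : exc g1 -> path (nbr alpha sigma) g1 p1 -> all od (g1 :: p1) ->
  uniq (map vtx (g1 :: p1) ++ [:: vtx (alpha (last g1 p1))]) ->
  exc (alpha (last g1 p1)) -> all (fun g => ~~ exc (alpha g)) (belast g1 p1) -> False.
Proof.
move=> ex1 pa ao u ex2 ae.
have ak := alphaK.
set P := g1 :: p1; set l1 := last g1 p1 in u ex2.
case/existsP: ex1 => gx /andP[gxF /eqP vgx].
case/existsP: ex2 => gy /andP[gyF /eqP vgy].
have pc : path (cr alpha sigma) g1 p1 by apply: sub_path pa => ?? /andP[].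
have xy : vtx g1 != vtx (alpha l1).
  move: u; rewrite cats1 rcons_uniq => /andP[nin _]; apply: contraNneq nin => <-.
  by rewrite inE eqxx.
have gxy : gx != gy by apply: contraNneq xy => E; rewrite -vgx -vgy E.
have oddP z : z \in P -> odd (w z) by move=> zP; move/allP: ao; apply.
have Pn z : z \in P -> (z \notin F) && (alpha z \notin F).
  move=> zP; have oz := oddP _ zP; apply/andP; split.
    by apply: contraL oz => /evF.
  by apply: contraL oz => /evF; rewrite oddA.
have fc : fconnect phi gy gx by rewrite -porbit_fcon FP.
set N := fingraph.order phi gy; set i1 := findex phi gy gx.
have i1N : i1 < N by apply: findex_max.
have i10 : 0 < i1 by rewrite lt0n findex_eq0 eq_sym.
have itx : iter i1 phi gy = gx by apply: iter_findex.
have ity : iter (N - i1) phi gx = gy.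
  by rewrite -itx -iterD subnK ?(ltnW i1N) // iter_order //; exact: perm_inj.
set arc1 := traject phi gy i1; set arc2 := traject phi gx (N - i1).
have Oe : fingraph.orbit phi gy = arc1 ++ arc2.
  by rewrite /fingraph.orbit -/N -{1}(subnKC (ltnW i1N)) trajectD itx.
have uO : uniq (arc1 ++ arc2) by rewrite -Oe orbit_uniq.
have memO z : (z \in arc1 ++ arc2) = (z \in F).
  by rewrite -Oe -fconnect_orbit -porbit_fcon FP.
have a1F z : z \in arc1 -> z \in F by move=> zi; rewrite -memO mem_cat zi.
have a2F z : z \in arc2 -> z \in F by move=> zi; rewrite -memO mem_cat zi orbT.
have dis z : z \in arc1 -> z \notin arc2.
  by move=> z1; move: uO; rewrite cat_uniq => /and3P[_ /hasPn h _]; apply/negP => /h; rewrite z1.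
have gy1 : gy \in arc1 by rewrite /arc1; case: (i1) i10 => // i _; rewrite trajectS inE eqxx.
have gx2 : gx \in arc2.
  have n2 : 0 < N - i1 by rewrite subn_gt0.
  by rewrite /arc2; case: (N - i1) n2 => // i _; rewrite trajectS inE eqxx.
have [i1' ei1] : exists i, i1 = i.+1 by exists i1.-1; rewrite prednK.
have [i2' ei2] : exists i, N - i1 = i.+1 by exists (N - i1).-1; rewrite prednK // subn_gt0.
have arc1E : arc1 = gy :: traject phi (phi gy) i1' by rewrite /arc1 ei1 trajectS.
have arc2E : arc2 = gx :: traject phi (phi gx) i2' by rewrite /arc2 ei2 trajectS.
have last1 : vtx (alpha (last gy (traject phi (phi gy) i1'))) = vtx g1.
  by rewrite last_traject -vtx_phi -iterS -ei1 itx vgx.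
have last2 : vtx (alpha (last gx (traject phi (phi gx) i2'))) = vtx (alpha l1).
  by rewrite last_traject -vtx_phi -iterS -ei2 ity vgy.
have innerP v : v \in map vtx p1 -> forall z, z \in F -> vtx z != v.
  rewrite (tails_heads pc) => /mapP[g gin ->] z zF.
  have := allP ae g gin; apply: contraNneq => E.
  by apply/existsP; exists z; rewrite zF E eqxx.
have noAF g : g \in F -> alpha g \notin F.
  move=> gF; apply/negP => /wF[w0 _]; by case: (wF gF); rewrite w0.
have l1P : l1 \in P by rewrite /P /l1 mem_last.
have uP : uniq (map vtx P) by move: u; rewrite cat_uniq => /andP[].
have ua1 : uniq arc1 by move: uO; rewrite cat_uniq => /andP[].
have ua2 : uniq arc2 by move: uO; rewrite cat_uniq => /and3P[].
set C1 := P ++ arc1.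
have gc1 : graph_cycle alpha sigma C1.
  have := extract ak (q := C1) (x0 := g1) (i := 0); rewrite drop0; apply => //.
  - rewrite /C1 /P /= cat_path pa /= arc1E /= arc_path // andbT.
    rewrite /nbr /cr vgy eqxx /=; apply/negP => /eqP E.
    by have := evF gyF; rewrite E oddA oddP.
  - rewrite map_cat cat_uniq uP (map_inj_in_uniq _) ?ua1 ?andbT; last first.
      by move=> z1 z2 /a1F h1 /a1F h2; apply: injF.
    apply/hasPn => v /mapP[z zin ->]; rewrite /P /= inE negb_or; apply/andP; split.
      apply/negP => /eqP; rewrite -vgx => /(injF (a1F _ zin) gxF) E.
      by move: (dis z zin); rewrite E gx2.
    by apply/negP => /innerP /(_ z (a1F _ zin)); rewrite eqxx.
  - by rewrite /C1 last_cat arc1E /= last1.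
set P' := map alpha (rev P).
have memP' z : (z \in P') = (alpha z \in P) by rewrite /P' mem_revA.
have P'r : P' = rcons (map alpha (rev p1)) (alpha g1) by rewrite /P' /P rev_cons map_rcons.
have P'h : P' = alpha l1 :: map alpha (rev (belast g1 p1)).
  by rewrite /P' /P lastI rev_rcons.
set C2 := P' ++ arc2.
have gc2 : graph_cycle alpha sigma C2.
  have := extract ak (q := C2) (x0 := g1) (i := 0); rewrite drop0; apply => //.
  - rewrite /C2 arc2E {1}P'r cat_rcons sorted_cat_cons -P'r rev_nbr //= arc_path // andbT.
    rewrite /nbr /cr ak vgx eqxx /=; apply/negP => /eqP E.
    by have := evF gxF; rewrite E oddP // /P inE eqxx.
  - have mP' : map vtx P' = rev (rcons (map vtx p1) (vtx (alpha l1))).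
      by rewrite /P' -map_comp map_rev; congr rev; exact: heads pc.
    rewrite map_cat cat_uniq mP' rev_uniq (map_inj_in_uniq _) ?ua2 ?andbT; last first.
      by move=> z1 z2 /a2F h1 /a2F h2; apply: injF.
    apply/andP; split.
      by move: u => /= /andP[_]; rewrite cats1.
    apply/hasPn => v /mapP[z zin ->]; rewrite mem_rev mem_rcons inE negb_or; apply/andP; split.
      apply/negP => /eqP; rewrite -vgy => /(injF (a2F _ zin) gyF) E.
      by move: (dis gy gy1); rewrite -E zin.
    by apply/negP => /innerP /(_ z (a2F _ zin)); rewrite eqxx.
  - by rewrite /C2 size_cat arc2E addnS.
  - by rewrite /C2 last_cat arc2E /= last2 P'h.
have dir1 : all (fun g => 0 < w (alpha g)) C1.
  rewrite all_cat directed_odd //=; apply/allP => z /a1F zF; by case: (wF zF).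
have dir2 : all (fun g => 0 < w (alpha g)) C2.
  rewrite all_cat; apply/andP; split; last by apply/allP => z /a2F zF; case: (wF zF).
  by rewrite /P' all_map all_rev; apply/allP => z /oddP oz /=; rewrite ak odd_gt0.
pose S z := [|| z \in P, alpha z \in P, z \in F | alpha z \in F].
have h1 : forall z, S z -> S (alpha z).
  by move=> z; rewrite /S ak => /or4P[] ->; rewrite ?orbT.
have h2 : forall z, ~~ S z -> [&& z \notin C1, alpha z \notin C1, z \notin C2 & alpha z \notin C2].
  move=> z; rewrite /S => /norP[n1 /norP[n2 /norP[n3 n4]]].
  apply/and4P; split; rewrite /C1 /C2 mem_cat negb_or ?memP' ?ak.
  - by rewrite n1 /=; exact: contra (a1F _) n3.
  - by rewrite n2 /=; exact: contra (a1F _) n4.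
  - by rewrite n2 /=; exact: contra (a2F _) n3.
  - by rewrite n1 /=; exact: contra (a2F _) n4.
have r1 z : z \in C1 -> root_on_right alpha sigma z C1.
  by move=> zc; apply/hasP; exists z.
have r2 z : z \in C2 -> root_on_right alpha sigma z C2.
  by move=> zc; apply/hasP; exists z.
have phic c a1 a2 : fconnect phi a1 a2 -> connect (right_move alpha sigma c) a1 a2.
  move=> fc'; apply: (@connect_sub _ (frel phi) (right_move alpha sigma c) _ a1 a2 fc') => u' v' /eqP <-.
  by apply: connect1; rewrite /right_move eqxx.
have h3 : forall z, S z -> root_on_right alpha sigma z C1 || root_on_right alpha sigma z C2.
  move=> z /or4P[zP|azP|zF|azF].
  - by rewrite r1 // /C1 mem_cat zP.
  - by rewrite r2 ?orbT // /C2 mem_cat memP' azP.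
  - by move: zF; rewrite -memO mem_cat => /orP[z1|z2];
      [rewrite r1 // /C1 mem_cat z1 orbT | rewrite r2 ?orbT // /C2 mem_cat z2 orbT].
  - have gF := azF; rewrite -memO mem_cat in azF.
    have ngF := noAF _ gF; rewrite ak in ngF.
    case/orP: azF => [g1a|g2a].
    + apply/orP; right; apply/hasP; exists gx; first by rewrite /C2 mem_cat gx2 orbT.
      apply: connect_trans (phic _ gx (alpha z) _) (connect1 _).
        by rewrite -porbit_fcon FP.
      rewrite /right_move ak eqxx /= /C2 !mem_cat !memP' ak.
      apply/orP; right; apply/andP; split; apply/norP; split.
      * by apply: contraL gF => /Pn /andP[_].
      * exact: dis.
      * by apply: contraL gF => /Pn /andP[].
      * exact: contra (a2F _) ngF.
    + apply/orP; left; apply/hasP; exists gy; first by rewrite /C1 mem_cat gy1 orbT.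
      apply: connect_trans (phic _ gy (alpha z) _) (connect1 _).
        by rewrite -porbit_fcon FP.
      rewrite /right_move /= ak eqxx /= /C1 !mem_cat.
      apply/orP; right; apply/andP; split; apply/norP; split.
      * by apply: contraL gF => /Pn /andP[].
      * by apply/negP => /dis; rewrite g2a.
      * by apply: contraL gF => /Pn /andP[_].
      * exact: contra (a1F _) ngF.
have h4 : exists x0, S x0 by exists gy; rewrite /S gyF !orbT.
case/orP: (RR_all (sigma := sigma) ak h1 h2 h3 h4 conn r).
- by apply/negP/MO; rewrite /directed_circuit gc1 dir1.
- by apply/negP/MO; rewrite /directed_circuit gc2 dir2.
Qed.

Lemma part2 h : ~~ odd (w h).
Proof.
apply/negP => oh.
have ak := alphaK.
have odh : od h by [].
have [[c [gc ac]]|[p0 [pa0 ao0 u0 ex0 ae0]]] := walk ak stepH odh.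
  exact: cyc_contra gc ac.
have odg1 : od (alpha (last h p0)).
  by rewrite /od oddA; move/allP: ao0; apply; exact: mem_last.
have [[c [gc ac]]|[p1 [pa1 ao1 u1 ex1 ae1]]] := walk ak stepH odg1.
  exact: cyc_contra gc ac.
exact: (path_contra ex0 pa1 ao1 u1 ex1 ae1).
Qed.
End Part2.

Theorem proposition23 (b q : nat) :
  2 <= b -> b <= q ->
  (forall (H : finType) (bud : pred H) (alpha sigma : {perm H})
          (black : {set H} -> bool) (w : H -> nat) (hs : H),
     branching_mobile bud alpha sigma black w (2 * q) (2 * b) hs ->
     forall h, ~~ bud h -> ~~ odd (w h))
  /\
  (forall (D : finType) (alpha sigma : {perm D}) (hb r : D) (w : D -> nat),
     annular_dangulation alpha sigma (2 * q) (2 * b) hb r ->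
     has_girth alpha sigma (2 * b) ->
     pseudo_orientation alpha sigma (2 * b) hb w ->
     minimal_orientation alpha sigma w r ->
     forall h, ~~ odd (w h)).
Proof.
move=> b2 _; split.
- move=> H bud alpha sigma black w hs BM h nh.
  exact: (part1 b2 BM nh).
- move=> D alpha sigma hb r w AD _ PO MO h.
  exact: (part2 b2 AD PO MO h).
Qed.
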